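(* Let $(X,d),(Y,d)$ be metric spaces, $E,F$ strictly convex normed spaces over $\mathbb{K}$, and $T:\mathrm{Lip}(X,E)\to\mathrm{Lip}(Y,F)$ a surjective linear isometry satisfying Property P. If $f\in\mathrm{Lip}(X,E)$ satisfies $\|Tf(y_0)\|=\|Tf\|_\infty>L(Tf)$ for some $y_0\in Y$, then $L(f)\le\|f\|_\infty$.
   Context: $\mathbb{K}=\mathbb{R}$ or $\mathbb{C}$. Strictly convex: $\|e_1+e_2\|<2$ whenever $e_1\ne e_2$ have norm $1$. $\mathrm{Lip}(X,E)$: bounded Lipschitz maps $X\to E$, with Lipschitz number $L(f)$ and norm $\|f\|_L=\max\{\|f\|_\infty,L(f)\}$; $T$ is an isometry for this norm. For $e\in E$, $\tilde e$ is the constant function with value $e$; Property P: for every $y\in Y$ there is $e\in E$ with $(T\tilde e)(y)\ne0$. *)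

(* Defs.v *)
From HB Require Import structures.
From mathcomp Require Import all_boot all_order all_algebra.
From mathcomp Require Import complex.
From mathcomp Require Import classical_sets reals.
Set Implicit Arguments. Unset Strict Implicit. Unset Printing Implicit Defensive.
Import Order.TTheory GRing.Theory Num.Theory.
Local Open Scope ring_scope.
Local Open Scope classical_set_scope.

Definition scalarK (R : realType) (b : bool) : fieldType :=
  if b then (R[i] : fieldType) else (R : fieldType).

Definition absK (R : realType) (b : bool) : scalarK R b -> R :=
  match b as b return scalarK R b -> R with
  | true => fun z : R[i] => ComplexField.Normc.normc z
  | false => fun x : R => `|x|
  end.

Definition is_metric (R : realType) (X : Type) (d : X -> X -> R) : Prop :=
  [/\ forall x y, 0 <= d x y,
      forall x y, d x y = 0 <-> x = y,
      forall x y, d x y = d y x &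
      forall x y z, d x z <= d x y + d y z].

Definition is_norm (R : realType) (b : bool) (E : lmodType (scalarK R b))
    (nrm : E -> R) : Prop :=
  [/\ forall e, 0 <= nrm e,
      forall e, nrm e = 0 -> e = 0,
      forall (a : scalarK R b) e, nrm (a *: e) = absK a * nrm e &
      forall e1 e2, nrm (e1 + e2) <= nrm e1 + nrm e2].

Definition strictly_convex (R : realType) (b : bool) (E : lmodType (scalarK R b))
    (nrm : E -> R) : Prop :=
  forall e1 e2 : E, nrm e1 = 1 -> nrm e2 = 1 -> e1 <> e2 -> nrm (e1 + e2) < 2.

Definition supnorm (R : realType) (X E : Type) (nrm : E -> R) (f : X -> E) : R :=
  sup [set nrm (f x) | x in [set: X]].

Definition lipnum (R : realType) (X : Type) (d : X -> X -> R) (b : bool)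
    (E : lmodType (scalarK R b)) (nrm : E -> R) (f : X -> E) : R :=
  sup [set nrm (f p.1 - f p.2) / d p.1 p.2 | p in [set p : X * X | p.1 <> p.2]].

Definition is_Lip (R : realType) (X : Type) (d : X -> X -> R) (b : bool)
    (E : lmodType (scalarK R b)) (nrm : E -> R) (f : X -> E) : Prop :=
  (exists M : R, forall x, nrm (f x) <= M) /\
  (exists L : R, forall x y, nrm (f x - f y) <= L * d x y).

Definition lipnorm (R : realType) (X : Type) (d : X -> X -> R) (b : bool)
    (E : lmodType (scalarK R b)) (nrm : E -> R) (f : X -> E) : R :=
  Num.max (supnorm nrm f) (lipnum d nrm f).

(* Main.v *)
Require Import Defs.
From HB Require Import structures.
From mathcomp Require Import all_boot all_order all_algebra.
From mathcomp Require Import complex.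
From mathcomp Require Import classical_sets reals.
From mathcomp Require Import lra.
Import Order.TTheory GRing.Theory Num.Theory.
Local Open Scope ring_scope.
Definition realK (R : realType) (b : bool) : R -> scalarK R b :=
  match b as b return R -> scalarK R b with
  | true => fun r => (r%:C)%C
  | false => fun r => r
  end.
Arguments realK {R} b.

Lemma absK_realK (R : realType) (b : bool) (r : R) : absK (realK b r) = `|r|.
Proof.
case: b => //=.
by rewrite expr0n /= addr0 sqrtr_sqr.
Qed.

Lemma realKD (R : realType) (b : bool) (r s : R) :
  realK b (r + s) = realK b r + realK b s.
Proof. by case: b => //=; rewrite rmorphD. Qed.

Lemma realKN (R : realType) (b : bool) (r : R) :
  realK b (- r) = - realK b r.
Proof. by case: b => //=; rewrite rmorphN. Qed.

Lemma realK0 (R : realType) (b : bool) : realK b (0 : R) = 0.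
Proof. by case: b => //=; rewrite rmorph0. Qed.

Lemma realK1 (R : realType) (b : bool) : realK b (1 : R) = 1.
Proof. by case: b => //=; rewrite rmorph1. Qed.

Lemma realKM (R : realType) (b : bool) (r s : R) :
  realK b (r * s) = realK b r * realK b s.
Proof. by case: b => //=; rewrite rmorphM. Qed.

Local Open Scope classical_set_scope.

Lemma sup_ge0 (R : realType) (A : set R) : (forall z, A z -> 0 <= z) -> 0 <= sup A.
Proof.
move=> h.
case: (boolp.pselect (has_sup A)) => hs; last by rewrite sup_out.
have [[z Az] hub] := hs.
apply: le_trans (h z Az) _.
exact: sup_upper_bound.
Qed.

Lemma le_sup_elt (R : realType) (A : set R) z : has_ubound A -> A z -> z <= sup A.
Proof. by move=> hu Az; apply: ub_le_sup. Qed.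

Lemma sup_le_bound (R : realType) (A : set R) c :
  0 <= c -> (forall z, A z -> z <= c) -> sup A <= c.
Proof.
move=> c0 h.
case: (boolp.pselect (A !=set0)) => hn; first by apply: ge_sup.
have -> : A = set0.
  by apply/seteqP; split => // z Az; apply: hn; exists z.
by rewrite sup0.
Qed.

Set Implicit Arguments.
Section Norms.
Variables (R : realType) (b : bool) (E : lmodType (scalarK R b)) (nE : E -> R).
Hypothesis hn : is_norm nE.

Lemma nrm_realK r e : nE (realK b r *: e) = `|r| * nE e.
Proof. by case: hn => _ _ hs _; rewrite hs absK_realK. Qed.

Lemma nrm0 : nE 0 = 0.
Proof. by rewrite -(scale0r 0) -(realK0 R b) nrm_realK normr0 mul0r. Qed.

Lemma nrmN e : nE (- e) = nE e.
Proof. by rewrite -scaleN1r -realK1 -realKN nrm_realK normrN normr1 mul1r. Qed.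

Lemma nrm_ge0 e : 0 <= nE e.
Proof. by case: hn. Qed.

Lemma nrmD e1 e2 : nE (e1 + e2) <= nE e1 + nE e2.
Proof. by case: hn. Qed.

Lemma nrm_gt0 e : e <> 0 -> 0 < nE e.
Proof.
move=> ne; rewrite lt_neqAle nrm_ge0 andbT; apply/eqP => h.
by case: hn => _ h0 _ _; apply: ne; apply: h0.
Qed.
End Norms.
Unset Implicit Arguments.
Local Close Scope classical_set_scope.
Theorem lemma4p3 (R : realType) (b : bool)
  (X : Type) (dX : X -> X -> R) (hX : is_metric dX)
  (Y : Type) (dY : Y -> Y -> R) (hY : is_metric dY)
  (E : lmodType (scalarK R b)) (nE : E -> R) (hnE : is_norm nE)
  (hsE : strictly_convex nE)
  (F : lmodType (scalarK R b)) (nF : F -> R) (hnF : is_norm nF)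
  (hsF : strictly_convex nF)
  (T : (X -> E) -> (Y -> F))
  (T_Lip : forall f, is_Lip dX nE f -> is_Lip dY nF (T f))
  (T_lin : forall (a : scalarK R b) (f g : X -> E),
      is_Lip dX nE f -> is_Lip dX nE g ->
      T (fun x => a *: f x + g x) = (fun y => a *: T f y + T g y))
  (T_isom : forall f, is_Lip dX nE f -> lipnorm dY nF (T f) = lipnorm dX nE f)
  (T_surj : forall g, is_Lip dY nF g -> exists2 f, is_Lip dX nE f & T f = g)
  (T_P : forall y : Y, exists e : E, T (fun _ => e) y <> 0)
  (f : X -> E) (hf : is_Lip dX nE f) (y0 : Y)
  (hy0 : nF (T f y0) = supnorm nF (T f))
  (hlt : lipnum dY nF (T f) < supnorm nF (T f)) :
  lipnum dX nE f <= supnorm nE f.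
Proof.
rewrite leNgt; apply/negP => hgt.
have [e he] := T_P y0.
set u := T f y0 in hy0 *.
set v := T (fun _ => e) y0 in he.
set M := supnorm nF (T f) in hy0 hlt.
have hconst : is_Lip dX nE (fun _ : X => e).
  split; first by exists (nE e).
  by exists 0 => x y; rewrite subrr nrm0 // mul0r.
have Mdef : M = lipnum dX nE f.
  have := T_isom f hf; rewrite /lipnorm (max_l (ltW hlt)) -/M => ->.
  by rewrite (max_r (ltW hgt)).
set d := lipnum dX nE f - supnorm nE f.
have d0 : 0 < d by rewrite /d subr_gt0.
have ne0 : 0 <= nE e := nrm_ge0 hnE e.
set r := d / (nE e + 1).
have r0 : 0 < r by rewrite /r divr_gt0 // ltr_wpDl.
have rsmall : r * nE e < d.
  rewrite /r mulrC mulrA ltr_pdivrMr ?ltr_wpDl //.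
  rewrite mulrC ltr_pM2l //; lra.
have key : forall s : R, `|s| = r -> nF (realK b s *: v + u) <= M.
  move=> s hs.
  pose g := fun x => realK b s *: e + f x.
  have dg : forall x y, g x - g y = f x - f y.
    by move=> x y; rewrite /g [realK b s *: e + f x]addrC addrKA.
  have hg : is_Lip dX nE g.
    case: hf => [[Mf hMf] [Lf hLf]]; split.
      exists (`|s| * nE e + Mf) => x.
      apply: le_trans (nrmD hnE _ _) _.
      by rewrite nrm_realK // lerD2l.
    by exists Lf => x y; rewrite dg.
  have Tg : T g = fun y => realK b s *: T (fun _ => e) y + T f y.
    exact: (T_lin (realK b s) _ f hconst hf).
  have lipg : lipnum dX nE g = lipnum dX nE f.
    rewrite /lipnum; congr sup; apply/seteqP; split => z [p hp <-];
      by exists p => //; rewrite dg.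
  have supg : supnorm nE g < lipnum dX nE f.
    apply: (@le_lt_trans _ _ (r * nE e + supnorm nE f)); last first.
      by rewrite -ltrBrDr.
    apply: sup_le_bound.
      apply: addr_ge0; first by rewrite mulr_ge0 // ltW.
      rewrite /supnorm; apply: sup_ge0 => z [x _ <-]; exact: nrm_ge0 hnE _.
    move=> z [x _ <-].
    apply: le_trans (nrmD hnE _ _) _.
    rewrite nrm_realK // hs lerD2l.
    case: hf => [[Mf hMf] _].
    apply: le_sup_elt; last by exists x.
    by exists Mf => w [x' _ <-].
  have := T_isom g hg; rewrite [lipnorm dX nE g]/lipnorm lipg (max_r (ltW supg)) => hTg.
  apply: (@le_trans _ _ (supnorm nF (T g))).
    have [[Mg hMg] _] := T_Lip g hg.
    apply: le_sup_elt; first by exists Mg => w [x' _ <-].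
    by exists y0 => //; rewrite Tg.
  by rewrite Mdef -hTg /lipnorm le_max lexx.
have ha := key r (gtr0_norm r0).
have hc : nF (realK b (- r) *: v + u) <= M by apply: key; rewrite normrN gtr0_norm.
set a := realK b r *: v + u in ha.
set c := realK b (- r) *: v + u in hc.
have hac : a + c = realK b (1 + 1) *: u.
  rewrite /a /c realKN scaleNr addrACA subrr add0r realKD realK1.
  by rewrite scalerDl scale1r.
have hamc : a - c = realK b (r + r) *: v.
  by rewrite /a /c opprD addrACA subrr addr0 realKN scaleNr opprK realKD scalerDl.
have nac : nF (a + c) = 2 * M.
  rewrite hac nrm_realK // hy0 ger0_norm; lra.
have nv : 0 < nF v := nrm_gt0 hnF he.
have namc : 0 < nF (a - c).
  by rewrite hamc nrm_realK // gtr0_norm ?mulr_gt0 // addr_gt0.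
have tri := nrmD hnF a c.
have na : nF a = M by lra.
have nc : nF c = M by lra.
have M0 : 0 <= M by rewrite -hy0; exact: nrm_ge0 hnF _.
suff : nF (a - c) = 0 by move=> h; rewrite h ltxx in namc.
case: (eqVneq M 0) => [M00 | Mn0].
  have a0 : a = 0 by case: hnF => _ h _ _; apply: h; rewrite na.
  have c0 : c = 0 by case: hnF => _ h _ _; apply: h; rewrite nc.
  by rewrite a0 c0 subrr nrm0.
have Mp : 0 < M by rewrite lt_neqAle eq_sym Mn0.
set k := realK b M^-1.
have nk : forall w, nF (k *: w) = M^-1 * nF w.
  by move=> w; rewrite nrm_realK // ger0_norm // invr_ge0.
have eqac : k *: a = k *: c.
  apply: boolp.contrapT => hne.
  have := hsF (k *: a) (k *: c).
  rewrite !nk na nc mulVf // -scalerDr nk nac mulrCA mulVf // mulr1 ltxx.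
  by move=> /(_ erefl erefl hne).
have : nF (k *: (a - c)) = 0 by rewrite scalerBr eqac subrr nrm0.
rewrite nk => /eqP; rewrite mulf_eq0 invr_eq0 (negbTE Mn0) /= => /eqP //.
Qed.
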